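(* For every $k\ge 0$, $\mathbf F_{k+1}=\mathbf T\,\mathbf F_k$; that is, for every $a$-subset $I$ of $[-b,a-1]$, $\mathbf F_{k+1}[I]=\sum_J \mathbf T[I,J]\,\mathbf F_k[J]$, the sum running over all $a$-subsets $J$ of $[-b,a-1]$.
   Context: Let $S$ be a finite set of integers with $a:=\max S\ge 1$ and $b:=-\min S\ge 1$. Each $s\in S$ carries a weight $\omega_s$ in a field $K$ of characteristic $0$; set $\omega_s:=0$ for $s\in\mathbb Z\setminus S$, and for $s\in\mathbb Z$ put $\beta_s:=\delta_{s,0}-\omega_s$. Notation: $[m,n]:=\{i\in\mathbb Z: m\le i\le n\}$, $\mathbb N=\{0,1,2,\dots\}$, $\mathbb N_{\ge n}:=\{i\in\mathbb Z:i\ge n\}$, $X+c:=\{x+c:x\in X\}$; an $n$-subset is a subset of cardinality $n$. Given an integer $c$ and a finite set $I\subseteq\{i\in\mathbb Z:i<c\}$, an $(I,c)$-permutation of order $k\ge0$ is a bijection $\sigma:\mathbb N\to I\cup\mathbb N_{\ge c}$ with $\sigma(n)=n$ for all $n\ge k$; its number of inversions is $\mathrm{inv}(\sigma)=\#\{(i,j)\in\mathbb N^2:i<j,\ \sigma(i)>\sigma(j)\}$ and its signature is $\epsilon(\sigma)=(-1)^{\mathrm{inv}(\sigma)}$. For an $a$-subset $I$ of $[-b,a-1]$, $\mathfrak S_k^{(I)}$ denotes the (finite) set of $(I,a)$-permutations of order $k$, and for $\sigma\in\mathfrak S_k^{(I)}$, $\beta(\sigma):=\epsilon(\sigma)\prod_{i=0}^{k-1}\beta_{\sigma(i)-i}$.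 $\mathbf F_k$ is the vector indexed by the $a$-subsets of $[-b,a-1]$ with $\mathbf F_k[I]:=\sum_{\sigma\in\mathfrak S_k^{(I)}}\beta(\sigma)$. For a finite set $I\subseteq\mathbb Z$ and $s\in\mathbb Z$, $\epsilon_s(I):=(-1)^{\#\{i\in I:\ i<s\}}$. $\mathbf T$ is the square matrix with rows and columns indexed by the $a$-subsets of $[-b,a-1]$ and entries $\mathbf T[I,J]:=\epsilon_s(I)\beta_s$ if there is an integer $s$ with $I\cup\{a\}=(J+1)\cup\{s\}$ (such $s$ is then unique), and $\mathbf T[I,J]:=0$ otherwise. *)

(* Defs.v *)
From HB Require Import structures.
From mathcomp Require Import all_boot all_order all_algebra.
From Stdlib Require Import ClassicalEpsilon.
Set Implicit Arguments. Unset Strict Implicit. Unset Printing Implicit Defensive.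
Import Order.TTheory GRing.Theory Num.Theory.
Local Open Scope ring_scope.

Definition pb (P : Prop) : bool := if excluded_middle_informative P then true else false.

Section Defs.
Variables (K : fieldType) (S : seq int) (omega : int -> K) (a b : nat).

Definition wt (s : int) : K := if s \in S then omega s else 0.
Definition beta (s : int) : K := (s == 0)%:R - wt s.

(* the ordinal i : 'I_n encodes the integer i - b *)
Definition toZ n (i : 'I_n) : int := (nat_of_ord i)%:Z - b%:Z.

(* a subset I of [-b, a-1], encoded by a {set 'I_(a+b)} *)
Definition inZ (I : {set 'I_(a + b)}) (x : int) : Prop :=
  exists2 i, i \in I & toZ i = x.

Definition IcPerm (I : int -> Prop) (c : int) (k : nat) (sigma : nat -> int) : Prop :=
  [/\ forall n : nat, (k <= n)%N -> sigma n = n%:Z,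
      injective sigma,
      forall n, I (sigma n) \/ c <= sigma n
    & forall x, I x \/ c <= x -> exists n, sigma n = x].

(* number of inversions (i,j), i < j, counted for j < N.  For an (I,a)-permutation
   of order k with I in [-b,a-1], every inversion has j < b + a + k. *)
Definition ninv (N : nat) (sigma : nat -> int) : nat :=
  #|[set p : 'I_N * 'I_N | ((p.1 < p.2)%N && (sigma p.2 < sigma p.1))]|.

Definition ext k n (f : {ffun 'I_k -> 'I_n}) (m : nat) : int :=
  odflt (m%:Z) (omap (fun i : 'I_k => toZ (f i)) (insub m)).

(* F_k[I] = sum over S_k^{(I)} of eps(sigma) prod_{i<k} beta_{sigma(i)-i}.
   sigma restricted to [0,k) takes values in [-b, a+k-1], encoded by
   'I_(b+a+k). *)
Definition Fk (k : nat) (I : {set 'I_(a + b)}) : K :=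
  \sum_(f : {ffun 'I_k -> 'I_(b + a + k)}
          | pb (IcPerm (inZ I) (a%:Z) k (ext f)))
     (-1) ^+ (ninv (b + a + k) (ext f)) *
     \prod_(i < k) beta (ext f i - (nat_of_ord i)%:Z).

Definition epsS (I : {set 'I_(a + b)}) (s : int) : K :=
  (-1) ^+ #|[set i in I | toZ i < s]|.

Definition Tcond (I J : {set 'I_(a + b)}) (s : int) : Prop :=
  forall x : int, (inZ I x \/ x = a%:Z) <-> (inZ J (x - 1) \/ x = s).

Definition Tmx (I J : {set 'I_(a + b)}) : K :=
  match excluded_middle_informative (exists s, Tcond I J s) with
  | left H => let s := proj1_sig (constructive_indefinite_description _ H) in
              epsS I s * beta s
  | right _ => 0
  end.

End Defs.

(* Main.v *)
Require Import Defs.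
From HB Require Import structures.
From mathcomp Require Import all_boot all_order all_algebra.
From mathcomp Require Import zify ring lra.
From Stdlib Require Import ClassicalEpsilon.
Set Implicit Arguments. Unset Strict Implicit. Unset Printing Implicit Defensive.
Import Order.TTheory GRing.Theory Num.Theory.
Local Open Scope ring_scope.

Lemma perm_fwd (PI PJ : int -> Prop) (c s : int) k (sg tau : nat -> int) :
  sg 0%N = s -> (forall n, sg n.+1 = tau n + 1) ->
  IcPerm PJ c k tau -> (forall x, (PI x \/ x = c) <-> (PJ (x-1) \/ x = s)) ->
  ~ PJ (s-1) -> s <= c -> IcPerm PI c k.+1 sg.
Proof.
move=> h0 hS [tfix tinj trng tsurj] hT hs hsc; split.
- case=> [//|n] hn; rewrite hS tfix //; lia.
- case=> [|m] [|n] //; rewrite ?h0 ?hS => e.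
  + have [hj|] := trng n; last by lia.
    by case: hs; rewrite e addrK.
  + have [hj|] := trng m; last by lia.
    by case: hs; rewrite -e addrK.
  + by congr S; apply: tinj; move: e => /addIr.
- case=> [|n]; rewrite ?h0 ?hS.
  + have /hT [] : PJ (s - 1) \/ s = s by right.
    by left. by move=> ->; right.
  + have [hj|hj] := trng n.
    * have /hT [] : PJ (tau n + 1 - 1) \/ tau n + 1 = s by left; rewrite addrK.
      by left. by move=> ->; right.
    * right; lia.
- move=> x hx.
  have [hx'|hx'] : (PI x \/ x = c) \/ c + 1 <= x.
    case: hx => [h|h]; first by left; left.
    by have [->|?] := eqVneq x c; [left; right|right; lia].
  + have [hj|->] := proj1 (hT x) hx'.
    * have [n hn] := tsurj _ (or_introl hj).
      by exists n.+1; rewrite hS hn subrK.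
    * by exists 0%N.
  + have hx1 : c <= x - 1 by lia.
    have [n hn] := tsurj (x - 1) (or_intror hx1).
    by exists n.+1; rewrite hS hn subrK.
Qed.

Lemma perm_bwd (PI PJ : int -> Prop) (c s : int) k (sg tau : nat -> int) :
  sg 0%N = s -> (forall n, sg n.+1 = tau n + 1) ->
  IcPerm PI c k.+1 sg -> s <= c ->
  (forall y, PJ y <-> ((PI (y+1) \/ y+1 = c) /\ y+1 <> s)) ->
  IcPerm PJ c k tau /\ (forall x, (PI x \/ x = c) <-> (PJ (x-1) \/ x = s)).
Proof.
move=> h0 hS [sfix sinj srng ssurj] hsc hJ.
have tE n : tau n = sg n.+1 - 1 by rewrite hS addrK.
have neq0 n : sg n.+1 <> s by rewrite -h0 => /sinj.
split; first split.
- move=> n hn; rewrite tE sfix //; lia.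
- by move=> m n; rewrite !tE => /addIr /sinj [].
- move=> n; rewrite tE.
  have [h|h] := srng n.+1.
  + by left; apply/hJ; rewrite subrK; split; [left|apply: neq0].
  + have [e|?] := eqVneq (sg n.+1) c.
    * by left; apply/hJ; rewrite subrK; split; [right|apply: neq0].
    * right; lia.
- move=> x hx.
  have [hx'|hx'] : PJ x \/ c + 1 <= x + 1.
    by case: hx => [h|h]; [left|right; lia].
  + have [h1 h2] := proj1 (hJ x) hx'.
    have hx1 : PI (x+1) \/ c <= x+1 by case: h1 => [h|h]; [left|right; lia].
    have [[|n] hn] := ssurj (x+1) hx1.
      by rewrite h0 in hn; case: h2.
    by exists n; rewrite tE hn addrK.
  + have hx1 : c <= x + 1 by lia.
    have [[|n] hn] := ssurj (x+1) (or_intror hx1).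
      by rewrite h0 in hn; lia.
    by exists n; rewrite tE hn addrK.
- move=> x; split.
  + move=> hx; have [->|ne] := eqVneq x s; first by right.
    by left; apply/hJ; rewrite subrK; split => // /eqP; rewrite (negbTE ne).
  + case=> [/hJ [] | ->]; first by rewrite subrK.
    have := srng 0%N; rewrite h0 => -[h|h]; first by left.
    right; lia.
Qed.

Lemma card_setP (T : finType) (P : pred T) : #|[set x | P x]| = (\sum_(x : T) P x)%N.
Proof.
rewrite -sum1_card (big_mkcond (fun x => x \in _)) /=.
by apply: eq_bigr => x _; rewrite inE; case: (P x).
Qed.

Lemma ninv_sum N sg : ninv N sg = (\sum_(i<N) \sum_(j<N) nat_of_bool ((i<j)%N && (sg j < sg i)%R))%N.
Proof. by rewrite /ninv card_setP pair_bigA. Qed.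

Lemma ninvS N (sg tau : nat -> int) : (forall n, sg n.+1 = tau n + 1) ->
  ninv N.+1 sg = (#|[set j : 'I_N | (sg j.+1 < sg 0%N)%R]| + ninv N tau)%N.
Proof.
move=> hS; rewrite !ninv_sum card_setP big_ord_recl /=.
rewrite big_ord_recl /= add0n /bump /=; congr (_ + _)%N.
apply: eq_bigr => i _; rewrite big_ord_recl /= add0n.
by apply: eq_bigr => j _; rewrite /bump /= !add1n ltnS !hS ltrD2r.
Qed.

Lemma pbP (P : Prop) : reflect P (pb P).
Proof. by rewrite /pb; case: excluded_middle_informative => h; constructor. Qed.

Lemma uniq_size_eq (T : eqType) (s1 s2 : seq T) : uniq s1 -> uniq s2 -> s1 =i s2 -> size s1 = size s2.
Proof. by move=> u1 u2 e; apply: perm_size; apply: uniq_perm. Qed.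

Section Main.
Variables (K : fieldType) (S : seq int) (omega : int -> K) (a b : nat).
Hypotheses (ha : (1 <= a)%N) (hb : (1 <= b)%N)
  (hamax : forall s, s \in S -> s <= a%:Z)
  (hbmin : forall s, s \in S -> - b%:Z <= s).

Local Notation bt := (beta S omega).

Lemma beta0 s : (s < - b%:Z \/ a%:Z < s) -> bt s = 0.
Proof.
move=> hs; rewrite /beta /wt.
have -> : (s \in S) = false.
  apply/negP => /[dup] /hamax h1 /hbmin h2; lia.
have -> : (s == 0) = false by apply/eqP; lia.
by rewrite subr0.
Qed.

Lemma toZ_ge n (i : 'I_n) : - b%:Z <= toZ b i.
Proof. rewrite /toZ; lia. Qed.

Lemma toZ_lt (i : 'I_(a + b)) : toZ b i < a%:Z.
Proof. have := ltn_ord i; rewrite /toZ; lia. Qed.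

Lemma toZ_inj n : injective (@toZ b n).
Proof. move=> i j; rewrite /toZ => h; apply: val_inj => /=; lia. Qed.

Lemma toZ_enc (y : int) : - b%:Z <= y -> y < a%:Z -> exists j : 'I_(a + b), toZ b j = y.
Proof.
move=> h1 h2; have hy : (absz (y + b%:Z)%R < a + b)%N by lia.
by exists (Ordinal hy); rewrite /toZ /=; lia.
Qed.

Lemma inZ_map (X : {set 'I_(a + b)}) x : inZ X x <-> x \in map (@toZ b _) (enum X).
Proof.
split; first by case=> i hi <-; apply: map_f; rewrite mem_enum.
by case/mapP => i; rewrite mem_enum => hi ->; exists i.
Qed.

Lemma inZ_map1 (X : {set 'I_(a + b)}) x :
  inZ X (x - 1) <-> x \in map (fun i => toZ b i + 1) (enum X).
Proof.
split; first by case=> i hi e; apply/mapP; exists i; rewrite ?mem_enum // e subrK.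
by case/mapP => i; rewrite mem_enum => hi ->; exists i; rewrite ?addrK.
Qed.

Lemma uniq_mapZ (X : {set 'I_(a + b)}) : uniq (map (@toZ b _) (enum X)).
Proof. by rewrite map_inj_uniq ?enum_uniq //; apply: toZ_inj. Qed.

Lemma uniq_mapZ1 (X : {set 'I_(a + b)}) : uniq (map (fun i => toZ b i + 1) (enum X)).
Proof. by rewrite map_inj_uniq ?enum_uniq // => i j /addIr /toZ_inj. Qed.

Lemma a_notin (X : {set 'I_(a + b)}) : (a%:Z \in map (@toZ b _) (enum X)) = false.
Proof. by apply/negP => /mapP [i _ e]; have := toZ_lt i; rewrite -e ltxx. Qed.

Variables (I : {set 'I_(a + b)}) (hI : #|I| = a).

Lemma cardJ (J : {set 'I_(a + b)}) (s : int) :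
  (forall y, inZ J y <-> ((inZ I (y+1) \/ y+1 = a%:Z) /\ y+1 <> s)) ->
  (inZ I s \/ s = a%:Z) -> #|J| = a.
Proof.
move=> hJ hs.
set L := a%:Z :: map (@toZ b _) (enum I).
have uL : uniq L by rewrite /L /= a_notin uniq_mapZ.
have sL : s \in L by rewrite inE; case: hs => [/inZ_map -> | ->]; rewrite ?eqxx ?orbT.
rewrite cardE -(size_map (fun i => toZ b i + 1)).
rewrite (@uniq_size_eq _ _ (rem s L)) ?uniq_mapZ1 ?rem_uniq //.
  by rewrite size_rem // /L /= size_map -cardE hI.
move=> x; rewrite mem_rem_uniq // inE /L inE.
apply/idP/idP.
  move/inZ_map1/hJ; rewrite subrK => -[h1 h2]; apply/andP; split; first by apply/eqP.
  by case: h1 => [/inZ_map -> | ->]; rewrite ?eqxx ?orbT.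
case/andP => /eqP h1 h2; apply/inZ_map1/hJ; rewrite subrK; split => //.
by case/orP: h2 => [/eqP ->|/inZ_map]; [right|left].
Qed.

Lemma Tcond_notin (J : {set 'I_(a + b)}) (s : int) :
  Tcond I J s -> #|J| = a -> ~ inZ J (s - 1).
Proof.
move=> hT hJ hs.
set L := a%:Z :: map (@toZ b _) (enum I).
have uL : uniq L by rewrite /L /= a_notin uniq_mapZ.
have := @uniq_size_eq _ (map (fun i => toZ b i + 1) (enum J)) L (uniq_mapZ1 J) uL.
rewrite size_map -cardE hJ /L /= size_map -cardE hI => h.
have e : a = a.+1.
  apply: h => x; rewrite inE; apply/idP/idP.
  - move/inZ_map1 => hx; have /hT [] : inZ J (x - 1) \/ x = s by left.
      by move/inZ_map => ->; rewrite orbT.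
    by move=> ->; rewrite eqxx.
  - move=> hx; apply/inZ_map1; have /hT [//|->] : inZ I x \/ x = a%:Z.
      by case/orP: hx => [/eqP ->|/inZ_map]; [right|left].
    by [].
lia.
Qed.


Lemma extL k n (f : {ffun 'I_k -> 'I_n}) m (h : (m < k)%N) : ext b f m = toZ b (f (Ordinal h)).
Proof. by rewrite /ext insubT /=; congr (toZ _ (f _)); apply: val_inj. Qed.

Lemma extG k n (f : {ffun 'I_k -> 'I_n}) m : (k <= m)%N -> ext b f m = m%:Z.
Proof. by move=> h; rewrite /ext insubF // ltnNge h. Qed.

Lemma ext0 k n (f : {ffun 'I_k.+1 -> 'I_n}) : ext b f 0 = toZ b (f ord0).
Proof. by rewrite (extL _ (ltn0Sn k)); congr (toZ _ (f _)); apply: val_inj. Qed.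

Lemma ext_ge k n (f : {ffun 'I_k -> 'I_n}) m : - b%:Z <= ext b f m.
Proof.
case: (ltnP m k) => h; first by rewrite (extL _ h) toZ_ge.
rewrite extG //; lia.
Qed.

Definition wgt k (f : {ffun 'I_k -> 'I_(b + a + k)}) : K :=
  (-1) ^+ (ninv (b + a + k) (ext b f)) * \prod_(i < k) bt (ext b f i - (nat_of_ord i)%:Z).

Lemma wt_factor0 k (f : {ffun 'I_k -> 'I_(b + a + k)}) (i : 'I_k) : bt (ext b f i - (nat_of_ord i)%:Z) = 0 -> wgt f = 0.
Proof. by move=> h; rewrite /wgt (bigD1 i) //= h mul0r mulr0. Qed.

Variable k : nat.

Lemma ord0_lt : (0 < b + a + k.+1)%N. Proof. by rewrite addnS. Qed.
Lemma succ_lt (x : 'I_(b + a + k)) : (x.+1 < b + a + k.+1)%N.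
Proof. by rewrite addnS ltnS. Qed.
Lemma pred_lt (x : 'I_(b + a + k.+1)) : (x.-1 < b + a + k)%N.
Proof. have := ltn_ord x; have := addnS (b + a) k; lia. Qed.

Definition encS (s : int) : 'I_(b + a + k.+1) := insubd (Ordinal ord0_lt) (absz (s + b%:Z)%R).

Lemma toZ_encS s : - b%:Z <= s -> s <= a%:Z -> toZ b (encS s) = s.
Proof.
move=> h1 h2; rewrite /toZ /encS val_insubd.
case: ifP => h; first lia.
exfalso; move/negbT: h; rewrite -leqNgt; lia.
Qed.

Definition gC (s : int) (g : {ffun 'I_k -> 'I_(b + a + k)}) : {ffun 'I_k.+1 -> 'I_(b + a + k.+1)} :=
  [ffun i => if unlift ord0 i is Some j then Ordinal (succ_lt (g j)) else encS s].

Definition gD (f : {ffun 'I_k.+1 -> 'I_(b + a + k.+1)}) : {ffun 'I_k -> 'I_(b + a + k)} :=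
  [ffun i => Ordinal (pred_lt (f (lift ord0 i)))].

Lemma gC_ext0 s g : - b%:Z <= s -> s <= a%:Z -> ext b (gC s g) 0 = s.
Proof. by move=> h1 h2; rewrite ext0 ffunE unlift_none toZ_encS. Qed.

Lemma gC_extS s g n : ext b (gC s g) n.+1 = ext b g n + 1.
Proof.
case: (ltnP n k) => h.
  have h' : (n.+1 < k.+1)%N by [].
  rewrite (extL _ h') (extL _ h).
  have -> : Ordinal h' = lift ord0 (Ordinal h) by apply: val_inj.
  rewrite ffunE liftK /toZ /=; lia.
by rewrite !extG //; lia.
Qed.

Lemma gD_extS (f : {ffun 'I_k.+1 -> 'I_(b + a + k.+1)}) n : (forall i : 'I_k, (0 < f (lift ord0 i))%N) ->
  ext b f n.+1 = ext b (gD f) n + 1.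
Proof.
move=> hf; case: (ltnP n k) => h.
  have h' : (n.+1 < k.+1)%N by [].
  rewrite (extL _ h') (extL _ h).
  have -> : Ordinal h' = lift ord0 (Ordinal h) by apply: val_inj.
  rewrite ffunE /toZ /=; have := hf (Ordinal h); lia.
by rewrite !extG //; lia.
Qed.

Lemma count_lt (sg : nat -> int) s : IcPerm (inZ I) a%:Z k.+1 sg -> sg 0%N = s -> s <= a%:Z ->
  #|[set j : 'I_(b + a + k) | (sg j.+1 < sg 0%N)%R]| = #|[set i in I | toZ b i < s]|.
Proof.
move=> [sfix sinj srng ssurj] h0 hsa.
rewrite !cardE -(size_map (fun j : 'I_(b + a + k) => sg j.+1)) -(size_map (@toZ b _)).
apply: uniq_size_eq.
- by rewrite map_inj_uniq ?enum_uniq // => i j /sinj [] /val_inj.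
- by rewrite map_inj_uniq ?enum_uniq //; apply: toZ_inj.
move=> x; apply/mapP/mapP.
  case=> j; rewrite mem_enum inE h0 => hj ->.
  have [[i hi e]|h] := srng j.+1; last lia.
  by exists i; rewrite ?mem_enum ?inE ?hi ?e.
case=> i; rewrite mem_enum inE => /andP [hi hs] ->.
have [[|m] hm] := ssurj (toZ b i) (or_introl (ex_intro2 _ _ i hi erefl)).
  by move: hs; rewrite -hm h0 ltxx.
have hmN : (m < b + a + k)%N.
  case: (ltnP k.+1 m.+1) => hk; last lia.
  move: hm; rewrite sfix ?(ltnW hk) // => hm; have := toZ_lt i; lia.
by exists (Ordinal hmN); rewrite ?mem_enum ?inE /= ?h0 hm.
Qed.

Lemma wt_split (f : {ffun 'I_k.+1 -> 'I_(b + a + k.+1)}) (g : {ffun 'I_k -> 'I_(b + a + k)}) :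
  (forall n, ext b f n.+1 = ext b g n + 1) -> IcPerm (inZ I) a%:Z k.+1 (ext b f) ->
  ext b f 0 <= a%:Z ->
  wgt f = epsS K I (ext b f 0) * bt (ext b f 0) * wgt g.
Proof.
move=> hS hP hs; rewrite /wgt.
have -> : ninv (b + a + k.+1) (ext b f) = ninv (b + a + k).+1 (ext b f).
  exact: (congr1 (fun N => ninv N (ext b f)) (addnS _ _)).
rewrite /epsS (ninvS _ hS) (count_lt hP erefl hs) exprD.
rewrite big_ord_recl /= subr0.
have -> : \prod_(i < k) bt (ext b f (lift ord0 i) - (nat_of_ord (lift ord0 i))%:Z) =
          \prod_(i < k) bt (ext b g i - (nat_of_ord i)%:Z).
  by apply: eq_bigr => i _; rewrite lift0 hS; congr bt; lia.
ring.
Qed.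


Lemma ext_ord k' n (f : {ffun 'I_k' -> 'I_n}) (i : 'I_k') : ext b f i = toZ b (f i).
Proof. by rewrite (extL _ (ltn_ord i)); congr (toZ _ (f _)); apply: val_inj. Qed.

Definition sC (J : {set 'I_(a + b)}) : int :=
  match excluded_middle_informative (exists s, Tcond I J s) with
  | left H => proj1_sig (constructive_indefinite_description _ H)
  | right _ => 0 end.

Lemma Tmx_sC J : (exists s, Tcond I J s) ->
  Tmx S omega I J = epsS K I (sC J) * bt (sC J) /\ Tcond I J (sC J).
Proof.
rewrite /Tmx /sC; case: excluded_middle_informative => // H _; split => //.
exact: proj2_sig (constructive_indefinite_description _ H).
Qed.

Lemma Tmx0 J : ~ (exists s, Tcond I J s) -> Tmx S omega I J = 0.
Proof. by rewrite /Tmx; case: excluded_middle_informative. Qed.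

Lemma Tcond_range J s : Tcond I J s -> - b%:Z <= s /\ s <= a%:Z.
Proof.
move=> hT; have [[i hi <-]|->] := proj2 (hT s) (or_intror erefl).
  by rewrite toZ_ge; have := toZ_lt i; split => //; lia.
split => //; lia.
Qed.

Definition JD (f : {ffun 'I_k.+1 -> 'I_(b + a + k.+1)}) : {set 'I_(a + b)} :=
  [set j : 'I_(a + b) | ((toZ b j + 1 \in map (@toZ b _) (enum I)) || (toZ b j + 1 == a%:Z))
                        && (toZ b j + 1 != ext b f 0)].

Definition constr (p : {set 'I_(a + b)} * {ffun 'I_k -> 'I_(b + a + k)}) := gC (sC p.1) p.2.
Definition destr (f : {ffun 'I_k.+1 -> 'I_(b + a + k.+1)}) := (JD f, gD f).
Definition Qp (p : {set 'I_(a + b)} * {ffun 'I_k -> 'I_(b + a + k)}) :=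
  (#|p.1| == a) && pb (IcPerm (inZ p.1) a%:Z k (ext b p.2)) && pb (exists s, Tcond I p.1 s).

Lemma constr_ok p : Qp p ->
  pb (IcPerm (inZ I) a%:Z k.+1 (ext b (constr p))) /\
  wgt (constr p) = Tmx S omega I p.1 * wgt p.2 /\ destr (constr p) = p.
Proof.
case: p => J g; rewrite /Qp /= => /andP[/andP[/eqP hJ /pbP hP] /pbP hE].
have [hT hTc] := Tmx_sC hE; rewrite /constr /=.
move: hT hTc; set s := sC J => hT hTc.
have [hs1 hs2] := Tcond_range hTc.
have hns := Tcond_notin hTc hJ.
have h0 : ext b (gC s g) 0 = s := gC_ext0 g hs1 hs2.
have hS n : ext b (gC s g) n.+1 = ext b g n + 1 := gC_extS s g n.
have hPI : IcPerm (inZ I) a%:Z k.+1 (ext b (gC s g)) := perm_fwd h0 hS hP hTc hns hs2.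
split; first exact/pbP.
split; first by rewrite (wt_split hS hPI) h0 ?hs2 // hT.
rewrite /destr; congr pair.
- apply/setP => j; rewrite inE h0.
  have := hTc (toZ b j + 1); rewrite addrK => -[hl hr].
  apply/idP/idP.
  + case/andP => h1 /eqP h2.
    have : inZ I (toZ b j + 1) \/ toZ b j + 1 = a%:Z.
      by case/orP: h1 => [/inZ_map|/eqP]; [left|right].
    move/hl => [[j' hj' /toZ_inj e]|//].
    by rewrite -e.
  + move=> hj; apply/andP; split.
      have [[i hi e]|->] := hr (or_introl (ex_intro2 _ _ j hj erefl)); last by rewrite eqxx orbT.
      by rewrite -e map_f ?mem_enum.
    apply/eqP => e; apply: hns; rewrite -e addrK; by exists j.
- apply/ffunP => i; rewrite !ffunE; apply: val_inj => /=.
  by rewrite liftK.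
Qed.

Lemma destr_ok f : pb (IcPerm (inZ I) a%:Z k.+1 (ext b f)) -> wgt f != 0 ->
  Qp (destr f) && (constr (destr f) == f).
Proof.
move=> /pbP hP hw.
have [sfix sinj srng ssurj] := hP.
set s := ext b f 0.
have hsa : s <= a%:Z.
  rewrite leNgt; apply/negP => h; move/eqP: hw; apply.
  apply: (@wt_factor0 _ _ ord0); rewrite /= subr0; apply: beta0; right; exact: h.
have hnb n : (0 < n)%N -> ext b f n != - b%:Z.
  move=> hn; case: (ltnP n k.+1) => h.
    apply/eqP => e; move/eqP: hw; apply.
    apply: (@wt_factor0 _ _ (Ordinal h)); rewrite /= e; apply: beta0; left; lia.
  rewrite extG //; apply/eqP; lia.
have hpos (i : 'I_k) : (0 < f (lift ord0 i))%N.
  have := hnb (lift ord0 i) (ltn0Sn _); rewrite ext_ord /toZ; lia.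
have hS n : ext b f n.+1 = ext b (gD f) n + 1 := gD_extS n hpos.
have hJ : forall y, inZ (JD f) y <-> ((inZ I (y+1) \/ y+1 = a%:Z) /\ y+1 <> s).
  move=> y; split.
    case=> j; rewrite inE => /andP [h1 /eqP h2] <-; split => //.
    by case/orP: h1 => [/inZ_map|/eqP]; [left|right].
  move=> [h1 h2].
  have hy1 : - b%:Z <= y /\ y < a%:Z.
    case: h1 => [hi|e]; last by split; lia.
    have [[|m] hm] := ssurj _ (or_introl hi); first by case: h2.
    have := hnb m.+1 (ltn0Sn _); rewrite hm.
    case: hi => i _ e; have := toZ_ge i; have := toZ_lt i; rewrite e => ha1 hb1 hne.
    split; [|lia]. have : y + 1 <> - b%:Z by move=> e'; rewrite e' eqxx in hne.
    lia.
  have [j e] := toZ_enc (proj1 hy1) (proj2 hy1).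
  exists j => //; rewrite inE e; apply/andP; split; last by apply/eqP.
  by case: h1 => [/inZ_map -> //| ->]; rewrite eqxx orbT.
have [hPJ hTc] := perm_bwd (erefl s) hS hP hsa hJ.
have hs_in : inZ I s \/ s = a%:Z.
  have := srng 0%N; rewrite -/s => -[h|h]; [by left|right; lia].
have hcard := cardJ hJ hs_in.
have hE : exists s0, Tcond I (JD f) s0 by exists s.
rewrite /Qp /= hcard eqxx /=.
apply/andP; split; first by apply/andP; split; apply/pbP.
have [_ hT'] := Tmx_sC hE.
have es : sC (JD f) = s.
  have [h|->] := proj1 (hTc (sC (JD f))) (proj2 (hT' _) (or_intror erefl)) => //.
  by case: (Tcond_notin hT' hcard).
apply/eqP/ffunP => i; rewrite /constr /= es ffunE.
case: unliftP => [j|] ->.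
  by apply: val_inj; rewrite /= ffunE /= prednK.
apply: toZ_inj; rewrite toZ_encS //; first by rewrite -ext0.
exact: ext_ge.
Qed.

Lemma main_sec : Fk S omega k.+1 I =
  \sum_(J : {set 'I_(a + b)} | #|J| == a) Tmx S omega I J * Fk S omega k J.
Proof.
have -> : Fk S omega k.+1 I = \sum_(f : {ffun 'I_k.+1 -> 'I_(b + a + k.+1)} | pb (IcPerm (inZ I) a%:Z k.+1 (ext b f))) wgt f by [].
transitivity (\sum_(p | Qp p) Tmx S omega I p.1 * wgt p.2); last first.
  symmetry.
  rewrite (eq_bigr (fun J => \sum_(g : {ffun 'I_k -> 'I_(b + a + k)} | pb (IcPerm (inZ J) a%:Z k (ext b g))) Tmx S omega I J * wgt g));
    last by move=> J _; rewrite /Fk big_distrr.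
  rewrite pair_big_dep /= (bigID (fun p => pb (exists s, Tcond I p.1 s))) /=.
  rewrite [X in _ + X]big1 ?addr0 //.
  by move=> p /andP [_ /pbP h]; rewrite Tmx0 ?mul0r.
rewrite (reindex_onto destr constr); last by move=> p hp; case: (constr_ok hp) => _ [_ ->].
rewrite big_mkcond [RHS]big_mkcond; apply: eq_bigr => f _.
case E: (Qp (destr f) && (constr (destr f) == f)).
  move/andP: E => [hq /eqP hc]; have [h1 [h2 _]] := constr_ok hq.
  by rewrite hc in h1 h2; rewrite h1 h2.
case: ifP => // hP.
have [//|hw] := eqVneq (wgt f) 0.
by rewrite destr_ok in E.
Qed.

End Main.

Theorem mainTheorem3 (K : fieldType) (Kchar0 : [pchar K] =i pred0)
  (S : seq int) (omega : int -> K) (a b : nat)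
  (ha : (1 <= a)%N) (hb : (1 <= b)%N)
  (haS : a%:Z \in S) (hamax : forall s, s \in S -> s <= a%:Z)
  (hbS : - b%:Z \in S) (hbmin : forall s, s \in S -> - b%:Z <= s)
  (k : nat) (I : {set 'I_(a + b)}) (hI : #|I| = a) :
  Fk S omega (k.+1) I =
  \sum_(J : {set 'I_(a + b)} | #|J| == a) Tmx S omega I J * Fk S omega k J.
Proof. exact: main_sec. Qed.
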